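(* Let $\mathcal{A}$ be an abelian category and let $K, Y$ be objects. Consider two short exact sequences $\xi_1\colon 0\to K_1\to X_1\xrightarrow{\alpha_1} Y\to 0$ and $\xi_2\colon 0\to K_2\to X_2\xrightarrow{\alpha_2} Y\to 0$, and the statements: (1) there is a morphism $v\colon X_1\to X_2$ with $\alpha_1=\alpha_2\circ v$; (2) there is a morphism $u\colon K_1\to K_2$ with $[\xi_2]=[u.\xi_1]$; (3) $\mathrm{Im}\, c(\xi_2,K)\subseteq \mathrm{Im}\, c(\xi_1,K)$. Then $(1)\Leftrightarrow(2)\Rightarrow(3)$; consequently, if $\alpha_1$ and $\alpha_2$ are right equivalent then $\mathrm{Im}\,c(\xi_1,K)=\mathrm{Im}\,c(\xi_2,K)$. If moreover $K_2\in\mathrm{add}\,K$, then $(3)\Rightarrow(2)$; consequently, if both $K_1,K_2\in\mathrm{add}\,K$, then $\alpha_1$ and $\alpha_2$ are right equivalent if and only if $\mathrm{Im}\,c(\xi_1,K)=\mathrm{Im}\,c(\xi_2,K)$.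
   Context: For an object $K$ of an abelian category $\mathcal{A}$, $\Gamma(K)=\mathrm{End}_{\mathcal{A}}(K)$; $\mathrm{Hom}_{\mathcal{A}}(Y,K)$ and $\mathrm{Ext}^1_{\mathcal{A}}(Y,K)$ are left $\Gamma(K)$-modules. For a short exact sequence $\xi$, $[\xi]$ denotes its class in $\mathrm{Ext}^1$. For $\xi\colon 0\to K'\to X\to Y\to 0$ and $u\colon K'\to Z$, $u.\xi$ denotes the pushout of $\xi$ along $u$. The connecting map $c(\xi,Z)\colon \mathrm{Hom}_{\mathcal{A}}(K',Z)\to\mathrm{Ext}^1_{\mathcal{A}}(Y,Z)$ sends $u$ to $[u.\xi]$; it is a $\Gamma(Z)$-module morphism. $\mathrm{add}\,K$ is the full subcategory of direct summands of finite direct sums of copies of $K$. Two morphisms $\alpha_1\colon X_1\to Y$, $\alpha_2\colon X_2\to Y$ are right equivalent if each factors through the other (i.e. $\alpha_1=\alpha_2\circ v$ and $\alpha_2=\alpha_1\circ v'$ for some $v,v'$). *)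

(* Defs.v *)
From mathcomp Require Import all_boot all_algebra.
Set Implicit Arguments. Unset Strict Implicit. Unset Printing Implicit Defensive.
Import GRing.Theory.
Local Open Scope ring_scope.

Record PreAddCat := {
  Ob :> Type;
  Mor : Ob -> Ob -> zmodType;
  mcomp : forall A B C : Ob, Mor B C -> Mor A B -> Mor A C;
  idm : forall A : Ob, Mor A A;
  compA : forall (A B C D : Ob) (h : Mor C D) (g : Mor B C) (f : Mor A B),
      mcomp h (mcomp g f) = mcomp (mcomp h g) f;
  comp1m : forall (A B : Ob) (f : Mor A B), mcomp (idm B) f = f;
  compm1 : forall (A B : Ob) (f : Mor A B), mcomp f (idm A) = f;
  compDl : forall (A B C : Ob) (g g' : Mor B C) (f : Mor A B),
      mcomp (g + g') f = mcomp g f + mcomp g' f;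
  compDr : forall (A B C : Ob) (g : Mor B C) (f f' : Mor A B),
      mcomp g (f + f') = mcomp g f + mcomp g f'
}.

Arguments mcomp {C A B C0} _ _ : rename.
Arguments idm {C} A : rename.

Section Abelian.
Variable C : PreAddCat.

Definition mono {A B : C} (f : Mor A B) : Prop :=
  forall (T : C) (g h : Mor T A), mcomp f g = mcomp f h -> g = h.
Definition epi {A B : C} (f : Mor A B) : Prop :=
  forall (T : C) (g h : Mor B T), mcomp g f = mcomp h f -> g = h.

Definition is_kernel {A B Kk : C} (f : Mor A B) (k : Mor Kk A) : Prop :=
  mcomp f k = 0 /\
  forall (T : C) (t : Mor T A), mcomp f t = 0 -> exists! t' : Mor T Kk, mcomp k t' = t.

Definition is_cokernel {A B Q : C} (f : Mor A B) (q : Mor B Q) : Prop :=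
  mcomp q f = 0 /\
  forall (T : C) (t : Mor B T), mcomp t f = 0 -> exists! t' : Mor Q T, mcomp t' q = t.

Definition is_biproduct {A B S : C} (i1 : Mor A S) (i2 : Mor B S)
    (p1 : Mor S A) (p2 : Mor S B) : Prop :=
  [/\ mcomp p1 i1 = idm A, mcomp p2 i2 = idm B, mcomp p1 i2 = 0, mcomp p2 i1 = 0
    & mcomp i1 p1 + mcomp i2 p2 = idm S].

Definition abelian : Prop :=
  [/\ (exists Z : C, idm Z = 0),
      (forall A B : C, exists (S : C) (i1 : Mor A S) (i2 : Mor B S)
          (p1 : Mor S A) (p2 : Mor S B), is_biproduct i1 i2 p1 p2),
      ((forall (A B : C) (f : Mor A B), exists (Kk : C) (k : Mor Kk A), is_kernel f k) /\
       (forall (A B : C) (f : Mor A B), exists (Q : C) (q : Mor B Q), is_cokernel f q))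
    & ((forall (A B : C) (f : Mor A B), mono f -> exists (Z : C) (g : Mor B Z), is_kernel g f) /\
       (forall (A B : C) (f : Mor A B), epi f -> exists (Z : C) (g : Mor Z A), is_cokernel g f))].

Definition is_pushout {W X Z P : C} (f : Mor W X) (u : Mor W Z)
    (a : Mor X P) (b : Mor Z P) : Prop :=
  mcomp a f = mcomp b u /\
  forall (T : C) (x : Mor X T) (z : Mor Z T), mcomp x f = mcomp z u ->
    exists! t : Mor P T, mcomp t a = x /\ mcomp t b = z.

(** A (candidate) extension  0 -> Kk --E_in--> E_ob --E_out--> Y -> 0 *)
Record ext (Y Kk : C) := mkExt {
  E_ob : C;
  E_in : Mor Kk E_ob;
  E_out : Mor E_ob Y
}.

Definition short_exact {Y Kk : C} (e : ext Y Kk) : Prop :=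
  is_kernel (E_out e) (E_in e) /\ is_cokernel (E_in e) (E_out e).

(** Yoneda relation: a morphism of extensions which is the identity on both
    ends; for short exact sequences this is the equivalence relation whose
    classes form Ext^1(Y, Kk).  [ext_eq e e'] reads [e] = [e'] in Ext^1. *)
Definition ext_eq {Y Kk : C} (e e' : ext Y Kk) : Prop :=
  exists h : Mor (E_ob e) (E_ob e'),
    mcomp h (E_in e) = E_in e' /\ mcomp (E_out e') h = E_out e.

Definition is_pushout_ext {Y K' Z : C} (e : ext Y K') (u : Mor K' Z)
    (p : ext Y Z) : Prop :=
  exists a : Mor (E_ob e) (E_ob p),
    [/\ is_pushout (E_in e) u a (E_in p),
        mcomp (E_out p) a = E_out e & mcomp (E_out p) (E_in p) = 0].

Definition ext_push_eq {Y K' Z : C} (eta : ext Y Z) (u : Mor K' Z)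
    (e : ext Y K') : Prop :=
  exists p : ext Y Z, is_pushout_ext e u p /\ ext_eq p eta.

(** Im c(e, Kk) ⊆ Ext^1(Y, Kk), as the set of short exact sequences whose
    class lies in the image (a union of Yoneda classes). *)
Definition c_image {Y K' : C} (e : ext Y K') (Kk : C) : ext Y Kk -> Prop :=
  fun eta => short_exact eta /\ exists u : Mor K' Kk, ext_push_eq eta u e.

Definition right_equiv {X1 X2 Y : C} (a1 : Mor X1 Y) (a2 : Mor X2 Y) : Prop :=
  (exists v : Mor X1 X2, a1 = mcomp a2 v) /\ (exists v' : Mor X2 X1, a2 = mcomp a1 v').

Definition is_power (Kk S : C) (n : nat) (i : 'I_n -> Mor Kk S) (p : 'I_n -> Mor S Kk) : Prop :=
  (forall j l : 'I_n, mcomp (p j) (i l) = if j == l then idm Kk else 0) /\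
  \sum_(j < n) mcomp (i j) (p j) = idm S.

Definition in_add (Kk M : C) : Prop :=
  exists (n : nat) (S : C) (i : 'I_n -> Mor Kk S) (p : 'I_n -> Mor S Kk),
    is_power i p /\
    exists (L : C) (s1 : Mor M S) (s2 : Mor L S) (r1 : Mor S M) (r2 : Mor S L),
      [/\ mcomp r1 s1 = idm M, mcomp r2 s2 = idm L, mcomp r1 s2 = 0, mcomp r2 s1 = 0
        & mcomp s1 r1 + mcomp s2 r2 = idm S].

End Abelian.

Arguments c_image {C Y K'} e Kk _.

(* Main.v *)
From Pilot Require Import Defs.
From mathcomp Require Import all_boot all_algebra.
Set Implicit Arguments. Unset Strict Implicit. Unset Printing Implicit Defensive.
Import GRing.Theory.
Local Open Scope ring_scope.

Local Notation "g ∘ f" := (mcomp g f) (at level 40, left associativity).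
Definition mcompA := Pilot.Defs.compA.

Lemma comp0m (C : PreAddCat) (A B D : C) (f : Mor A B) : (0 : Mor B D) ∘ f = 0.
Proof.
have E := compDl (0 : Mor B D) 0 f. rewrite addr0 in E.
apply: (@addrI _ (0 ∘ f)). by rewrite -E addr0.
Qed.

Lemma compm0 (C : PreAddCat) (A B D : C) (g : Mor B D) : g ∘ (0 : Mor A B) = 0.
Proof.
have E := compDr g (0 : Mor A B) 0. rewrite addr0 in E.
apply: (@addrI _ (g ∘ 0)). by rewrite -E addr0.
Qed.

Lemma compNl (C : PreAddCat) (A B D : C) (g : Mor B D) (f : Mor A B) : (- g) ∘ f = - (g ∘ f).
Proof.
apply/eqP; rewrite -addr_eq0 -compDl addNr; apply/eqP; exact: comp0m.
Qed.

Lemma compNr (C : PreAddCat) (A B D : C) (g : Mor B D) (f : Mor A B) : g ∘ (- f) = - (g ∘ f).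
Proof.
apply/eqP; rewrite -addr_eq0 -compDr addNr; apply/eqP; exact: compm0.
Qed.

Lemma compBl (C : PreAddCat) (A B D : C) (g g' : Mor B D) (f : Mor A B) : (g - g') ∘ f = g ∘ f - g' ∘ f.
Proof. by rewrite compDl compNl. Qed.

Lemma compBr (C : PreAddCat) (A B D : C) (g : Mor B D) (f f' : Mor A B) : g ∘ (f - f') = g ∘ f - g ∘ f'.
Proof. by rewrite compDr compNr. Qed.

Lemma comp_sumr (C : PreAddCat) (A B D : C) (I : Type) (r : seq I) (P : pred I)
  (F : I -> Mor A B) (g : Mor B D) :
  g ∘ (\sum_(i <- r | P i) F i) = \sum_(i <- r | P i) g ∘ F i.
Proof. apply: big_morph; [exact: compDr | exact: compm0]. Qed.

Lemma comp_suml (C : PreAddCat) (A B D : C) (I : Type) (r : seq I) (P : pred I)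
  (F : I -> Mor B D) (g : Mor A B) :
  (\sum_(i <- r | P i) F i) ∘ g = \sum_(i <- r | P i) F i ∘ g.
Proof. apply: (big_morph (fun x => x ∘ g)); [move=> x y; exact: compDl | exact: comp0m]. Qed.

Lemma monoP (C : PreAddCat) (A B : C) (f : Mor A B) :
  (forall T (g : Mor T A), f ∘ g = 0 -> g = 0) -> mono f.
Proof.
move=> H T g h E; apply/eqP; rewrite -subr_eq0; apply/eqP/H.
by rewrite compBr E subrr.
Qed.

Lemma mono0 (C : PreAddCat) (A B T : C) (f : Mor A B) (g : Mor T A) :
  mono f -> f ∘ g = 0 -> g = 0.
Proof. move=> Hm E; apply: Hm; by rewrite E compm0. Qed.

Lemma epiP (C : PreAddCat) (A B : C) (f : Mor A B) :
  (forall T (g : Mor B T), g ∘ f = 0 -> g = 0) -> epi f.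
Proof.
move=> H T g h E; apply/eqP; rewrite -subr_eq0; apply/eqP/H.
by rewrite compBl E subrr.
Qed.

Lemma epi0 (C : PreAddCat) (A B T : C) (f : Mor A B) (g : Mor B T) :
  epi f -> g ∘ f = 0 -> g = 0.
Proof. move=> Hm E; apply: Hm; by rewrite E comp0m. Qed.

Lemma kernel_mono (C : PreAddCat) (A B Kk : C) (f : Mor A B) (k : Mor Kk A) :
  is_kernel f k -> mono k.
Proof.
case=> fk0 H T g h E.
have [t [_ U]] := H T (k ∘ g) ltac:(by rewrite mcompA fk0 comp0m).
by rewrite -(U g erefl) (U h (esym E)).
Qed.

Lemma cokernel_epi (C : PreAddCat) (A B Q : C) (f : Mor A B) (q : Mor B Q) :
  is_cokernel f q -> epi q.
Proof.
case=> qf0 H T g h E.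
have [t [_ U]] := H T (g ∘ q) ltac:(by rewrite -mcompA qf0 compm0).
by rewrite -(U g erefl) (U h (esym E)).
Qed.

Lemma kernel_of_coker (C : PreAddCat) (A B Kk Q : C) (g : Mor A B) (k : Mor Kk A) (c : Mor A Q) :
  is_kernel g k -> is_cokernel k c -> is_kernel c k.
Proof.
move=> [gk0 Hk] [ck0 Hc]; split=> // T t ct0.
have [g' [Eg _]] := Hc _ g gk0.
apply: Hk; by rewrite -Eg -mcompA ct0 compm0.
Qed.

Lemma coker_of_kernel (C : PreAddCat) (A B Kk Q : C) (g : Mor Kk A) (k : Mor Q A) (c : Mor A B) :
  is_cokernel g c -> is_kernel c k -> is_cokernel k c.
Proof.
move=> [cg0 Hc] [ck0 Hk]; split=> // T t tk0.
have [g' [Eg _]] := Hk _ g cg0.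
apply: Hc; by rewrite -Eg mcompA tk0 comp0m.
Qed.

Lemma mono_kernel (C : PreAddCat) (HC : abelian C) (A B Q : C) (f : Mor A B) (c : Mor B Q) :
  mono f -> is_cokernel f c -> is_kernel c f.
Proof.
move=> Hm Hc; case: HC => _ _ _ [Hmk _].
have [Z [g Hg]] := Hmk _ _ f Hm. exact: kernel_of_coker Hg Hc.
Qed.

Lemma epi_cokernel (C : PreAddCat) (HC : abelian C) (A B Q : C) (f : Mor A B) (k : Mor Q A) :
  epi f -> is_kernel f k -> is_cokernel k f.
Proof.
move=> Hm Hk; case: HC => _ _ _ [_ Hek].
have [Z [g Hg]] := Hek _ _ f Hm. exact: coker_of_kernel Hg Hk.
Qed.

Lemma po_exists (C : PreAddCat) (HC : abelian C) (W X Z : C) (f : Mor W X) (u : Mor W Z) :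
  exists (P : C) (a : Mor X P) (b : Mor Z P), is_pushout f u a b /\ (mono f -> mono b).
Proof.
case: (HC) => _ Hbip [_ Hcok] _.
have [S [i1 [i2 [p1 [p2 [e11 e22 e12 e21 eid]]]]]] := Hbip X Z.
have [P [q [qF Hq]]] := Hcok _ _ (i1 ∘ f - i2 ∘ u).
exists P, (q ∘ i1), (q ∘ i2); split; first split.
- apply/eqP; rewrite -subr_eq0 -!mcompA -compBr qF //.
- move=> T x z E.
  have [t [Et Ut]] := Hq T (x ∘ p1 + z ∘ p2)
    ltac:(by rewrite compDl !compBr !mcompA -(mcompA x p1 i1) -(mcompA x p1 i2)
      -(mcompA z p2 i1) -(mcompA z p2 i2) e11 e12 e21 e22 !compm1 !compm0 !comp0m
      subr0 sub0r E subrr).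
  exists t; split.
  + rewrite !mcompA Et !compDl -!mcompA e11 e21 e12 e22 !compm1 !compm0 addr0 add0r //.
  + move=> t' [Ex Ez]; apply: Ut.
    rewrite -[t' ∘ q]compm1 -eid compDr !mcompA -Ex -Ez !mcompA //.
- move=> Hf; apply: monoP => T g E.
  have HFm : mono (i1 ∘ f - i2 ∘ u).
    apply: monoP => T' t Et; apply: (mono0 Hf).
    have := congr1 (mcomp p1) Et.
    by rewrite compm0 compBl compBr !mcompA e11 e12 comp1m !comp0m subr0.
  have [_ Hk] := mono_kernel HC HFm (conj qF Hq).
  have [t' [Et' _]] := Hk _ (i2 ∘ g) ltac:(by rewrite mcompA).
  have t'0 : t' = 0.
    apply: (mono0 Hf); have := congr1 (mcomp p1) Et'.
    by rewrite compBl compBr !mcompA e11 e12 comp1m !comp0m subr0 => ->.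
  rewrite t'0 compm0 in Et'.
  by rewrite -[g]comp1m -e22 -mcompA -Et' compm0.
Qed.

Lemma ext_eq_refl (C : PreAddCat) (Y K : C) (e : ext Y K) : ext_eq e e.
Proof. exists (idm _); by rewrite comp1m compm1. Qed.

Lemma push_ext (C : PreAddCat) (HC : abelian C) (Y K' Z : C) (e : ext Y K') (u : Mor K' Z) :
  short_exact e -> exists p : ext Y Z, is_pushout_ext e u p /\ short_exact p.
Proof.
move=> [Hk Hc].
have [P [a [b [[Epo Hpo] Hmb]]]] := po_exists HC (E_in e) u.
have [o [[oa ob] Uo]] := Hpo Y (E_out e) 0 ltac:(by rewrite comp0m; case: Hk).
exists (@mkExt _ _ _ P b o).
have coker : is_cokernel b o.
  split=> // T t tb0.
  have tae : (t ∘ a) ∘ E_in e = 0 by rewrite -mcompA Epo mcompA tb0 comp0m.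
  have [t' [Et' Ut']] := (proj2 Hc) T (t ∘ a) tae.
  exists t'; split.
  - have [s [_ Us]] := Hpo T (t ∘ a) 0 ltac:(by rewrite comp0m).
    have h1 := Us t (conj erefl tb0).
    have e1 : t' ∘ o ∘ a = t ∘ a by rewrite -mcompA oa.
    have e2 : t' ∘ o ∘ b = 0 by rewrite -mcompA ob compm0.
    have h2 := Us (t' ∘ o) (conj e1 e2).
    by rewrite -h2.
  - move=> t'' E''; apply: Ut'; by rewrite -E'' -mcompA oa.
split; first by exists a; split.
split; last exact: coker.
exact: (mono_kernel HC (Hmb (kernel_mono Hk)) coker).
Qed.

Lemma push_map (C : PreAddCat) (Y K' Z : C) (e : ext Y K') (u : Mor K' Z) (eta : ext Y Z) :
  ext_push_eq eta u e -> exists v : Mor (E_ob e) (E_ob eta), E_out e = E_out eta ∘ v.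
Proof.
move=> [p [[a [_ Ea _]] [h [_ Eh]]]]. exists (h ∘ a). by rewrite mcompA Eh Ea.
Qed.

Lemma map_push (C : PreAddCat) (HC : abelian C) (Y K1 K2 : C) (e1 : ext Y K1) (e2 : ext Y K2) :
  short_exact e1 -> short_exact e2 ->
  forall v : Mor (E_ob e1) (E_ob e2), E_out e1 = E_out e2 ∘ v -> exists u, ext_push_eq e2 u e1.
Proof.
move=> [[o1 _] _] [[o2 Hk2] _] v Ev.
have [u [Eu _]] := Hk2 _ (v ∘ E_in e1) ltac:(by rewrite mcompA -Ev o1).
have [P [a [b [[Epo Hpo] _]]]] := po_exists HC (E_in e1) u.
have [o [[oa ob] Uo]] := Hpo Y (E_out e1) 0 ltac:(by rewrite comp0m).
exists u, (@mkExt _ _ _ P b o); split; first by exists a; split.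
have [h [[ha hb] _]] := Hpo _ v (E_in e2) (esym Eu).
exists h; split => //=.
have e1' : E_out e2 ∘ h ∘ a = E_out e1 by rewrite -mcompA ha.
have e2' : E_out e2 ∘ h ∘ b = 0 by rewrite -mcompA hb o2.
by have := Uo (E_out e2 ∘ h) (conj e1' e2') => ->.
Qed.

Lemma pb_exists (C : PreAddCat) (HC : abelian C) (Y K2 X1 : C) (e2 : ext Y K2) (al : Mor X1 Y) :
  short_exact e2 -> exists (Q : C) (pi1 : Mor Q X1) (pi2 : Mor Q (E_ob e2)) (j : Mor K2 Q),
    [/\ al ∘ pi1 = E_out e2 ∘ pi2, pi1 ∘ j = 0, pi2 ∘ j = E_in e2 & is_cokernel j pi1].
Proof.
move=> [Hk2 Hc2]; case: (HC) => _ Hbip [Hker _] _.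
have [S [i1 [i2 [p1 [p2 [e11 e22 e12 e21 eid]]]]]] := Hbip X1 (E_ob e2).
have [Q [k [mk Hk]]] := Hker _ _ (al ∘ p1 - E_out e2 ∘ p2).
have mi2 : (al ∘ p1 - E_out e2 ∘ p2) ∘ i2 = - E_out e2.
  by rewrite compBl -!mcompA e12 e22 compm0 compm1 sub0r.
have [j [Ej _]] := Hk _ (i2 ∘ E_in e2) ltac:(by rewrite mcompA mi2 compNl (proj1 Hk2) oppr0).
exists Q, (p1 ∘ k), (p2 ∘ k), j.
have Hepi2 := cokernel_epi Hc2.
have km := kernel_mono (conj mk Hk).
have mepi : epi (al ∘ p1 - E_out e2 ∘ p2).
  apply: epiP => T t tm; apply: (epi0 Hepi2).
  have := congr1 (fun x => x ∘ i2) tm; rewrite /= -mcompA mi2 comp0m compNr.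
  by move/eqP; rewrite oppr_eq0 => /eqP.
have [_ Hm] := epi_cokernel HC mepi (conj mk Hk).
have Ecomp : al ∘ (p1 ∘ k) = E_out e2 ∘ (p2 ∘ k).
  by apply/eqP; rewrite -subr_eq0 !mcompA -compBl mk.
have pj0 : p1 ∘ k ∘ j = 0 by rewrite -mcompA Ej mcompA e12 comp0m.
have pj : p2 ∘ k ∘ j = E_in e2 by rewrite -mcompA Ej mcompA e22 comp1m.
split=> //.
have pi1epi : epi (p1 ∘ k).
  apply: epiP => T t tp.
  have [t' [Et' _]] := Hm T (t ∘ p1) ltac:(by rewrite -mcompA).
  have := congr1 (fun x => x ∘ i2) Et'; rewrite /= -!mcompA mi2 e12 compm0 compNr.
  move/eqP; rewrite oppr_eq0 => /eqP /(epi0 Hepi2) t'0.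
  rewrite t'0 comp0m in Et'.
  by rewrite -[t]compm1 -e11 mcompA -Et' comp0m.
apply: (epi_cokernel HC pi1epi); split=> // T t Et.
have E2 : E_out e2 ∘ (p2 ∘ k ∘ t) = 0 by rewrite mcompA -Ecomp -mcompA Et compm0.
have [s [Es _]] := (proj2 Hk2) _ _ E2.
exists s; split.
- apply: km. rewrite mcompA Ej -mcompA Es.
  rewrite -[k ∘ t]comp1m -eid compDl -!mcompA.
  by rewrite (mcompA p1) Et compm0 add0r.
- move=> s' Es'; apply: (kernel_mono Hk2).
  by rewrite Es -Es' mcompA pj.
Qed.

Lemma add_lift (C : PreAddCat) (HC : abelian C) (Kk Y K1 K2 : C)
    (xi1 : ext Y K1) (xi2 : ext Y K2) (H1 : short_exact xi1) (H2 : short_exact xi2) :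
  in_add Kk K2 -> (forall eta : ext Y Kk, c_image xi2 Kk eta -> c_image xi1 Kk eta) ->
  exists v : Mor (E_ob xi1) (E_ob xi2), E_out xi1 = E_out xi2 ∘ v.
Proof.
move=> [n [S [i [p [[Hpi Hsum] [L [s1 [s2 [r1 [r2 [rs1 _ _ _ _]]]]]]]]]]] H3.
have [Q [pi1 [pi2 [j [Epb pj0 pj Hcok]]]]] := pb_exists HC (E_out xi1) H2.
have Hrho : forall l : 'I_n, exists r : Mor Q Kk, r ∘ j = - (p l ∘ s1).
  move=> l.
  have [eta [Hpe Hse]] := push_ext HC (p l ∘ s1) H2.
  have Hc2 : c_image xi2 Kk eta.
    split=> //; exists (p l ∘ s1), eta; split=> //; exact: ext_eq_refl.
  have [_ [u' Hpu]] := H3 eta Hc2.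
  have [g Eg] := push_map Hpu.
  case: Hpe => a [[Epo _] Ea _].
  have Ed : E_out eta ∘ (g ∘ pi1 - a ∘ pi2) = 0.
    by rewrite compBr !mcompA -Eg Ea Epb subrr.
  have [r [Er _]] := (proj2 (proj1 Hse)) _ _ Ed.
  exists r; apply: (kernel_mono (proj1 Hse)).
  by rewrite mcompA Er compBl -!mcompA pj0 pj compm0 sub0r Epo compNr.
have [rho Erho] := fin_all_exists Hrho.
pose R := - (r1 ∘ \sum_(l < n) i l ∘ rho l).
have ERj : R ∘ j = idm K2.
  rewrite /R compNl -mcompA comp_suml.
  have -> : \sum_(l < n) i l ∘ rho l ∘ j = - ((\sum_(l < n) i l ∘ p l) ∘ s1).
    rewrite comp_suml -sumrN; apply: eq_bigr => l _.
    by rewrite -mcompA Erho compNr mcompA.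
  by rewrite Hsum comp1m compNr opprK rs1.
have [sg [Esg _]] := (proj2 Hcok) _ (idm Q - j ∘ R)
  ltac:(by rewrite compBl comp1m -mcompA ERj compm1 subrr).
have pe := cokernel_epi Hcok.
have ps : pi1 ∘ sg = idm _.
  apply: pe; rewrite -mcompA Esg compBr compm1 mcompA pj0 comp0m subr0 comp1m //.
exists (pi2 ∘ sg).
by rewrite mcompA -Epb -mcompA ps compm1.
Qed.

Theorem lemma2p1 (C : PreAddCat) (HC : abelian C) (Kk Y K1 K2 : C)
    (xi1 : ext Y K1) (xi2 : ext Y K2)
    (H1 : short_exact xi1) (H2 : short_exact xi2) :
  let st1 := exists v : Mor (E_ob xi1) (E_ob xi2), E_out xi1 = mcomp (E_out xi2) v in
  let st2 := exists u : Mor K1 K2, ext_push_eq xi2 u xi1 in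
  let st3 := forall eta : ext Y Kk, c_image xi2 Kk eta -> c_image xi1 Kk eta in
  [/\ (st1 <-> st2),
      (st2 -> st3),
      (right_equiv (E_out xi1) (E_out xi2) ->
         forall eta : ext Y Kk, c_image xi1 Kk eta <-> c_image xi2 Kk eta),
      (in_add Kk K2 -> st3 -> st2)
    & (in_add Kk K1 -> in_add Kk K2 ->
         (right_equiv (E_out xi1) (E_out xi2) <->
          forall eta : ext Y Kk, c_image xi1 Kk eta <-> c_image xi2 Kk eta))].
Proof.
have S13 : forall (Ka Kb : C) (e1 : ext Y Ka) (e2 : ext Y Kb), short_exact e1 -> short_exact e2 ->
    forall v : Mor (E_ob e1) (E_ob e2), E_out e1 = E_out e2 ∘ v ->
    forall eta : ext Y Kk, c_image e2 Kk eta -> c_image e1 Kk eta.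
  move=> Ka Kb e1 e2 He1 He2 v Ev eta [Hse [w Hw]].
  have [g Eg] := push_map Hw.
  have Egv : E_out e1 = E_out eta ∘ (g ∘ v) by rewrite mcompA -Eg.
  have [u Hu] := map_push HC He1 Hse Egv.
  by split=> //; exists u.
cbv zeta.
have s12 : (exists v : Mor (E_ob xi1) (E_ob xi2), E_out xi1 = E_out xi2 ∘ v) -> exists u : Mor K1 K2, ext_push_eq xi2 u xi1 by case=> v Ev; exact: (map_push HC H1 H2 Ev).
have s21 : (exists u : Mor K1 K2, ext_push_eq xi2 u xi1) -> exists v : Mor (E_ob xi1) (E_ob xi2), E_out xi1 = E_out xi2 ∘ v by case=> u Hu; exact: (push_map Hu).
have s23 : (exists u : Mor K1 K2, ext_push_eq xi2 u xi1) -> forall eta : ext Y Kk, c_image xi2 Kk eta -> c_image xi1 Kk eta by move/s21 => [v Ev]; exact: (S13 _ _ _ _ H1 H2 v Ev).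
have req : right_equiv (E_out xi1) (E_out xi2) ->
    forall eta : ext Y Kk, c_image xi1 Kk eta <-> c_image xi2 Kk eta.
  case=> [[v Ev] [v' Ev']] eta; split.
  - exact: S13 H2 H1 v' Ev' eta.
  - exact: S13 H1 H2 v Ev eta.
split=> //.
- by move=> Ha Hs; apply: s12; exact: (add_lift HC H1 H2 Ha Hs).
- move=> Ha1 Ha2; split; first exact: req.
  move=> Heq; split.
  + apply: (add_lift HC H1 H2 Ha2) => eta /Heq //.
  + apply: (add_lift HC H2 H1 Ha1) => eta /Heq //.
Qed.
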